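(* Let $r \geqslant 4$ and let $F$ be a graph which is an $r$-witness set. Then $e(F) \geqslant \lambda(r)\big(v(F) - 2\big) + 1$.
   Context: $\lambda(r) = \frac{\binom{r}{2}-2}{r-2}$. The $K_r$-bootstrap process on $K_n$ from $G$: repeatedly add any edge of $K_n$ which is the only missing edge of some $r$-clique; $\langle G\rangle_{K_r}$ is the final closure. Witness-Set Algorithm: for $e \in G$ set $F(e) = \{e\}$. Choose an order in which to infect the edges of $\langle G\rangle_{K_r} \setminus G$ one by one, each newly infected edge completing some $r$-clique all of whose other edges are already in $G$ or already infected (if several cliques are completed, choose one). When $e$ is infected by the chosen $r$-clique $K$, set $F(e) := \bigcup_{e' \in K,\, e' \neq e} F(e')$. A graph $F$ is an $r$-witness set if there exist a graph $G$, an edge $e \in \langle G\rangle_{K_r}$ and a realization of this algorithm (choice of order and cliques) with $F = F(e)$; here $v(F)$ is the number of vertices spanned by the edges of $F$. *)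

(* Defs.v *)
From mathcomp Require Import all_boot all_order all_algebra.
Local Open Scope nat_scope.
Set Implicit Arguments. Unset Strict Implicit. Unset Printing Implicit Defensive.
Import Order.TTheory GRing.Theory Num.Theory.

(* Vertices of K_n are 'I_n; an edge is a 2-element vertex set; a graph is a
   set of edges. *)
Section Bootstrap.
Variables (n r : nat).

Definition is_graph (G : {set {set 'I_n}}) : bool := [forall f in G, #|f| == 2].

Definition clique_edges (K : {set 'I_n}) : {set {set 'I_n}} :=
  [set f : {set 'I_n} | (f \subset K) && (#|f| == 2)].

Definition Kr_closed (H : {set {set 'I_n}}) : bool :=
  [forall K : {set 'I_n}, (#|K| == r) ==> (#|clique_edges K :\: H| != 1)].

(* A realization of the infection order: a sequence of steps (e, K) meaning
   edge e is infected by the r-clique K.  [valid_from H s]: starting from the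
   current edge set H (G plus already infected edges), each step infects a new
   edge e of the r-clique K all of whose other edges are already present. *)
Fixpoint valid_from (H : {set {set 'I_n}})
    (s : seq ({set 'I_n} * {set 'I_n})) : bool :=
  match s with
  | [::] => true
  | (e, K) :: s' =>
      [&& #|K| == r, #|e| == 2, e \subset K, e \notin H,
          [forall f in clique_edges K, (f != e) ==> (f \in H)]
        & valid_from (e |: H) s']%B
  end.

Definition infected (s : seq ({set 'I_n} * {set 'I_n})) : {set {set 'I_n}} :=
  [set p.1 | p in s].

(* Witness-set algorithm: F(e) = {e} for e in G; when e is infected by K,
   F(e) := union of F(e') over the other edges e' of K. *)
Definition wstep (Fm : {set 'I_n} -> {set {set 'I_n}})
    (p : {set 'I_n} * {set 'I_n}) : {set 'I_n} -> {set {set 'I_n}} :=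
  fun x => if x == p.1 then \bigcup_(f in clique_edges p.2 | f != p.1) Fm f
           else Fm x.

Definition witness_map (s : seq ({set 'I_n} * {set 'I_n}))
    : {set 'I_n} -> {set {set 'I_n}} :=
  foldl wstep (fun x => [set x]) s.

Definition is_witness_set (F : {set {set 'I_n}}) : Prop :=
  exists (G : {set {set 'I_n}}) (s : seq ({set 'I_n} * {set 'I_n}))
         (e : {set 'I_n}),
    [/\ is_graph G, valid_from G s, Kr_closed (G :|: infected s),
        e \in G :|: infected s & F = witness_map s e].

End Bootstrap.

Definition vF n (F : {set {set 'I_n}}) : nat := #|\bigcup_(f in F) f|.

Definition lambda (r : nat) : rat := (('C(r, 2)%:R - 2) / (r%:R - 2))%R.

(* Main.v *)
Require Import Defs.
From mathcomp Require Import all_boot all_order all_algebra.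
From mathcomp Require Import ring lra.
Import Order.TTheory GRing.Theory Num.Theory.
Set Implicit Arguments. Unset Strict Implicit. Unset Printing Implicit Defensive.



Section Bin. Local Open Scope ring_scope.
Lemma binr2 (m : nat) : ('C(m, 2)%:R : rat) * 2 = m%:R * (m%:R - 1).
Proof.
case: m => [|m]; first by rewrite bin0n mul0r mul0r.
have := bin_ffact m.+1 2; rewrite ffactnS ffactn1 /= => h.
have -> : (2 : rat) = (2`!)%:R by [].
rewrite -natrM h natrM -natr1 addrK //.
Qed. End Bin.

Section Lam.
Variable r : nat.
Hypothesis r4 : (4 <= r)%N.
Local Open Scope ring_scope.

Lemma rpos : (0 : rat) < r%:R - 2.
Proof. have : (4 : rat) <= r%:R by rewrite (ler_nat _ 4). lra. Qed.

Lemma lam_id : lambda r * (r%:R - 2) = 'C(r, 2)%:R - 2.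
Proof. rewrite /lambda mulfVK //; have := rpos; rewrite lt0r => /andP[]//. Qed.

Lemma lam_ge0 : 0 <= lambda r.
Proof.
rewrite /lambda divr_ge0 ?ltW ?rpos //.
have := binr2 r; have : (4 : rat) <= r%:R by rewrite (ler_nat _ 4).
nra.
Qed.

Lemma bin_le (s : nat) : (2 <= s)%N -> (s < r)%N ->
  ('C(s, 2)%:R : rat) <= 1 + lambda r * (s%:R - 2).
Proof.
move=> s2 sr.
have hs : (2 : rat) <= s%:R by rewrite (ler_nat _ 2).
have hsr : ((s.+1)%:R : rat) <= r%:R by rewrite ler_nat.
rewrite -natr1 in hsr.
have hr : (4 : rat) <= r%:R by rewrite (ler_nat _ 4).
have bs := binr2 s; have br := binr2 r.
have lid := lam_id.
have lp := rpos.
suff : ('C(s, 2)%:R - 1) * (r%:R - 2) <= lambda r * (r%:R - 2) * (s%:R - 2).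
  rewrite -mulrA [(r%:R - 2) * _]mulrC mulrA ler_pM2r //. lra.
rewrite lid.
have : 0 <= (s%:R - 2) * ((r%:R - 2) * (r%:R - 1 - s%:R) + (r%:R - 4) : rat).
  apply: mulr_ge0; nra.
nra.
Qed.

Lemma part_le (T s : nat) : (1 <= T)%N -> (T <= 'C(s, 2))%N -> (T <= 'C(r, 2) - 1)%N ->
  (s <= r)%N -> (T%:R : rat) <= 1 + lambda r * (s%:R - 2).
Proof.
move=> T1 Ts Tr sr.
case: (ltngtP s r) sr => // [sr _|-> _].
  have s2 : (2 <= s)%N.
    case: s Ts {sr} => [|[|s]] //; by rewrite ?bin0n ?bin1n ?bin_small // => /(leq_trans T1).
  apply: le_trans (bin_le s2 sr); by rewrite ler_nat.
rewrite lam_id.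
have : (T%:R : rat) <= ('C(r, 2) - 1)%:R by rewrite ler_nat.
have c1 : (1 <= 'C(r, 2))%N by apply: leq_trans T1 (leq_trans Tr (leq_subr _ _)).
rewrite natrB //. lra.
Qed.
End Lam.

Section Sets.
Variable n : nat.
Notation ES := ({set {set 'I_n}}).

Definition Vs (P : ES) : {set 'I_n} := \bigcup_(f in P) f.

Lemma Vs_sub (P Q : ES) : P \subset Q -> Vs P \subset Vs Q.
Proof.
move=> PQ; apply/bigcupsP => f fP; apply: (bigcup_sup f); exact: (subsetP PQ).
Qed.

Lemma card_bigcup_le (I : finType) (T : finType) (P : pred I) (F : I -> {set T}) :
  (#|\bigcup_(i | P i) F i| <= \sum_(i | P i) #|F i|)%N.
Proof.
elim/big_rec2: _ => [|i m U _ le]; first by rewrite cards0.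
by rewrite (leq_trans (leq_card_setU _ _).1) ?leq_add2l.
Qed.

Local Open Scope ring_scope.

Definition good r (P : ES) : Prop :=
  lambda r * ((#|Vs P|)%:R - 2) + 1 <= (#|P|%:R : rat).

Lemma merge_good r (Q : {set ES}) (K e : {set 'I_n}) :
  (4 <= r)%N -> #|K| = r -> e \in clique_edges K ->
  (forall P, P \in Q -> good r P) ->
  {in Q &, forall A B : ES, A != B -> [disjoint A & B]} ->
  (forall z, z \in clique_edges K :\ e -> exists2 P, P \in Q & z \subset Vs P) ->
  (forall P, P \in Q -> exists2 z, z \in clique_edges K :\ e & z \subset Vs P) ->
  good r (\bigcup_(P in Q) P).
Proof.
move=> r4 cK eK gQ dQ cov nonempty.
set Z := clique_edges K :\ e.
set X := \bigcup_(P in Q) P.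
pose T P := [set z in Z | z \subset Vs P].
have cardZ : #|Z| = ('C(r, 2) - 1)%N.
  have := cardsD1 e (clique_edges K); rewrite eK /clique_edges.
  rewrite cards_draws cK add1n => ->; by rewrite subn1.
have H7 : (#|X|%:R : rat) = \sum_(P in Q) (#|P|%:R : rat).
  have tQ : trivIset Q by apply/trivIsetP.
  move: tQ; rewrite /trivIset /cover => /eqP <-.
  by rewrite natr_sum.
have H1 : (#|Vs X|%:R : rat) <= (\sum_(P in Q) (#|Vs P :\: K|%:R : rat)) + r%:R.
  rewrite -natr_sum -natrD ler_nat.
  have sub : Vs X \subset (\bigcup_(P in Q) (Vs P :\: K)) :|: K.
    apply/subsetP => v /bigcupP [f] /bigcupP [P PQ fP] vf.
    rewrite inE; case vK: (v \in K); rewrite ?orbT // orbF.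
    apply/bigcupP; exists P => //; rewrite inE vK /=.
    by apply/bigcupP; exists f.
  apply: leq_trans (subset_leq_card sub) _.
  apply: leq_trans (leq_card_setU _ _).1 _.
  by rewrite cK leq_add2r card_bigcup_le.
have H2 : (#|Z|%:R : rat) <= \sum_(P in Q) (#|T P|%:R : rat).
  rewrite -natr_sum ler_nat.
  have sub : Z \subset \bigcup_(P in Q) T P.
    apply/subsetP => z zZ; have [P PQ zP] := cov z zZ.
    by apply/bigcupP; exists P => //; rewrite inE zZ.
  exact: leq_trans (subset_leq_card sub) (card_bigcup_le _ _).
have H3 : forall P, P \in Q ->
    (#|T P|%:R : rat) <= 1 + lambda r * (#|Vs P :&: K|%:R - 2).
  move=> P PQ; apply: part_le => //.
  - have [z zZ zP] := nonempty P PQ; rewrite card_gt0; apply/set0Pn; exists z.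
    by rewrite inE zZ.
  - rewrite -cards_draws; apply: subset_leq_card; apply/subsetP => z.
    rewrite !inE => /andP [/and3P [_ zK ->] zP].
    by rewrite subsetI zP zK.
  - rewrite -cardZ; apply: subset_leq_card; apply/subsetP => z.
    by rewrite inE => /andP [].
  - by rewrite -cK subset_leq_card // subsetIr.
have H5 : forall P : ES, (#|Vs P|%:R : rat) = #|Vs P :&: K|%:R + #|Vs P :\: K|%:R.
  by move=> P; rewrite -natrD cardsID.
have H6 : (#|Z|%:R : rat) = lambda r * (r%:R - 2) + 1.
  rewrite lam_id // cardZ natrB; first lra.
  have := cardsD1 e (clique_edges K); rewrite eK /clique_edges.
  by rewrite cards_draws cK add1n => ->.
rewrite /good H7.
have l0 := lam_ge0 r4.
apply: le_trans (_ : lambda r * (\sum_(P in Q) (#|Vs P :\: K|%:R : rat) + r%:R - 2) + 1 <= _).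
  by rewrite lerD2r ler_wpM2l // lerD2r.
apply: le_trans (_ : lambda r * (\sum_(P in Q) (#|Vs P :\: K|%:R : rat)) +
   \sum_(P in Q) (1 + lambda r * (#|Vs P :&: K|%:R - 2)) <= _).
  have : (#|Z|%:R : rat) <= \sum_(P in Q) (1 + lambda r * (#|Vs P :&: K|%:R - 2)).
    by apply: le_trans H2 _; apply: ler_sum.
  rewrite H6; lra.
rewrite mulr_sumr -big_split /=; apply: ler_sum => P PQ.
apply: le_trans (gQ P PQ); rewrite H5; lra.
Qed.
End Sets.

Section Inv.
Variable n r : nat.
Hypothesis r4 : (4 <= r)%N.
Notation ES := ({set {set 'I_n}}).

Definition Inv (H : ES) (Fm : {set 'I_n} -> ES) : Prop :=
  [/\ forall x, x \in H -> #|x| = 2,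
      forall x, x \in H -> x \subset Vs (Fm x) &
      forall Y : ES, Y \subset H -> exists Pi : {set ES},
        [/\ forall P, P \in Pi -> good r P /\ P \subset \bigcup_(y in Y) Fm y,
            {in Pi &, forall A B : ES, A != B -> [disjoint A & B]} &
            forall y, y \in Y -> exists2 P, P \in Pi & Fm y \subset P]].

Lemma Vs1 (x : {set 'I_n}) : Vs [set x] = x.
Proof. by rewrite /Vs big_set1. Qed.

Lemma Inv_base (G : ES) : is_graph G -> Inv G (fun x => [set x]).
Proof.
move=> /forall_inP gG; split.
- by move=> x /gG /eqP.
- by move=> x _; rewrite Vs1.
move=> Y YG; exists [set [set y] | y in Y]; split.
- move=> P /imsetP [y yY ->]; split.
    rewrite /good Vs1 cards1 (eqP (gG y (subsetP YG y yY))) subrr mulr0 add0r.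
    by [].
  by rewrite sub1set; apply/bigcupP; exists y => //; rewrite inE.
- move=> A B /imsetP [a _ ->] /imsetP [b _ ->] ab.
  rewrite disjoints1 inE; apply: contra ab => /eqP ->; by [].
- by move=> y yY; exists [set y] => //; apply: imset_f.
Qed.

Lemma Inv_step (H : ES) Fm (e K : {set 'I_n}) :
  Inv H Fm -> #|K| = r -> #|e| = 2 -> e \subset K -> e \notin H ->
  (forall f, f \in clique_edges K -> f != e -> f \in H) ->
  Inv (e |: H) (wstep Fm (e, K)).
Proof.
move=> [c2 cov part] cK ce eK eH hK.
set Fm' := wstep Fm (e, K).
have Fe : Fm' e = \bigcup_(f in clique_edges K | f != e) Fm f.
  by rewrite /Fm' /wstep /= eqxx.
have FH : forall x, x \in H -> Fm' x = Fm x.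
  move=> x xH; rewrite /Fm' /wstep /=; case: eqP => // xe.
  by move: eH; rewrite -xe xH.
have eC : e \in clique_edges K by rewrite inE eK ce eqxx.
have ZH : forall z, z \in clique_edges K :\ e -> z \in H.
  by move=> z; rewrite in_setD1 => /andP [ze zC]; apply: hK.
have ZF : forall z, z \in clique_edges K :\ e -> Fm z \subset Fm' e.
  move=> z; rewrite in_setD1 => /andP [ze zC]; rewrite Fe.
  by apply: (bigcup_sup z); rewrite zC ze.
split.
- move=> x; rewrite in_setU1 => /orP [/eqP -> //|]; exact: c2.
- move=> x; rewrite in_setU1 => /orP [/eqP ->|xH]; last by rewrite FH //; exact: cov.
  apply/subsetP => u ue.
  have : (0 < #|K :\: e|)%N.
    have := cardsID e K; rewrite (setIidPr eK) ce cK => h.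
    by rewrite -(ltn_add2l 2) h addn0 (leq_trans _ r4).
  rewrite card_gt0 => /set0Pn [w]; rewrite inE => /andP [we wK].
  have uw : u != w by apply: contraNneq we => <-.
  have zC : [set u; w] \in clique_edges K :\ e.
    rewrite !inE cards2 uw eqxx andbT; apply/andP; split.
      by apply: contraNneq we => <-; rewrite !inE eqxx orbT.
    by rewrite subUset !sub1set wK (subsetP eK u ue).
  have := Vs_sub (ZF _ zC); move/subsetP; apply.
  by apply: (subsetP (cov _ (ZH _ zC))); rewrite !inE eqxx.
move=> Y YH.
case: (boolP (e \in Y)) => eY; last first.
  have YH' : Y \subset H.
    apply/subsetP => y yY; have := subsetP YH y yY; rewrite in_setU1 => /orP [/eqP ye|//].
    by move: eY; rewrite -ye yY.
  have [Pi [h1 h2 h3]] := part Y YH'.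
  have eqU : \bigcup_(y in Y) Fm' y = \bigcup_(y in Y) Fm y.
    by apply: eq_bigr => y yY; rewrite FH // (subsetP YH' y yY).
  exists Pi; split => //.
    by move=> P PPi; rewrite eqU; apply: h1.
  by move=> y yY; rewrite FH ?(subsetP YH' y yY) //; apply: h3.
set Z := clique_edges K :\ e.
set Y' := (Y :\ e) :|: Z.
have Y'H : Y' \subset H.
  apply/subsetP => y; rewrite in_setU => /orP [|yZ]; first (rewrite in_setD1 => /andP [ye yY]).
    by have := subsetP YH y yY; rewrite in_setU1 (negbTE ye).
  by apply: ZH.
have [Pi' [h1 h2 h3]] := part Y' Y'H.
have UU : \bigcup_(y in Y') Fm y \subset \bigcup_(y in Y) Fm' y.
  apply/bigcupsP => y; rewrite in_setU => /orP [|yZ]; first (rewrite in_setD1 => /andP [ye yY]).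
    have yH : y \in H by have := subsetP YH y yY; rewrite in_setU1 (negbTE ye).
    by rewrite -FH //; apply: (bigcup_sup y).
  apply: (subset_trans (ZF y yZ)).
  exact: (bigcup_sup e).
set Q := [set P in Pi' | [exists z in Z, Fm z \subset P]].
set X := \bigcup_(P in Q) P.
have QPi : Q \subset Pi' by apply/subsetP => P; rewrite inE => /andP [].
exists ((Pi' :\: Q) :|: [set X]); split.
- move=> P; rewrite !inE => /orP [/andP [PQ PPi]|/eqP ->].
    by have [g s] := h1 P PPi; split => //; apply: subset_trans s UU.
  split.
    rewrite /X; refine (merge_good r4 cK eC _ _ _ _).
    + by move=> P0 PQ; exact: (h1 P0 (subsetP QPi P0 PQ)).1.
    + by move=> A B AQ BQ; apply: h2; apply: (subsetP QPi).
    + move=> z zZ.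
      have zY : z \in Y' by rewrite in_setU zZ orbT.
      have [P0 PPi FP] := h3 z zY; exists P0.
        by rewrite inE PPi; apply/existsP; exists z; rewrite zZ FP.
      by apply: subset_trans (cov z (ZH z zZ)) (Vs_sub FP).
    + move=> P0; rewrite inE => /andP [PPi /existsP [z /andP [zZ FP]]].
      by exists z => //; apply: subset_trans (cov z (ZH z zZ)) (Vs_sub FP).
  apply/bigcupsP => P0 PQ; apply: subset_trans UU.
  exact: (h1 P0 (subsetP QPi P0 PQ)).2.
- have dX : forall P, P \in Pi' :\: Q -> [disjoint X & P].
    move=> P; rewrite in_setD => /andP [PQ PPi].
    rewrite disjoint_sym; apply: bigcup_disjoint => R RQ.
    apply: h2 => //; first exact: (subsetP QPi).
    by apply: contraNneq PQ => ->.
  move=> A B; rewrite !in_setU !in_set1 => /orP [AQ|/eqP ->] /orP [BQ|/eqP ->] AB.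
  + apply: h2 AB; [move: AQ | move: BQ]; by rewrite in_setD => /andP [].
  + by rewrite disjoint_sym; apply: dX.
  + by apply: dX.
  + by rewrite eqxx in AB.
- move=> y yY; case: (eqVneq y e) => [->|ye].
    exists X; first by rewrite in_setU in_set1 eqxx orbT.
    rewrite Fe; apply/bigcupsP => z zC.
    have zZ : z \in Z by rewrite in_setD1 andbC.
    have zY : z \in Y' by rewrite in_setU zZ orbT.
    have [P PPi FP] := h3 z zY.
    have PQ : P \in Q by rewrite inE PPi; apply/existsP; exists z; rewrite zZ FP.
    exact: subset_trans FP (bigcup_sup _ PQ).
  have yY' : y \in Y' by rewrite in_setU in_setD1 ye yY.
  have yH : y \in H by have := subsetP YH y yY; rewrite in_setU1 (negbTE ye).
  rewrite FH //; have [P PPi FP] := h3 y yY'.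
  case: (boolP (P \in Q)) => PQ.
    exists X; first by rewrite in_setU in_set1 eqxx orbT.
    exact: subset_trans FP (bigcup_sup _ PQ).
  by exists P => //; rewrite in_setU in_setD PQ PPi.
Qed.

Lemma infected_nil : infected (n:=n) [::] = set0.
Proof. by apply/setP => x; rewrite inE; apply/imsetP => [[p]]. Qed.

Lemma infected_cons p (s : seq ({set 'I_n} * {set 'I_n})) :
  infected (p :: s) = p.1 |: infected s.
Proof.
apply/setP => x; rewrite in_setU1; apply/imsetP/orP => [[q]|[/eqP ->|/imsetP [q qs ->]]].
- by rewrite inE => /orP [/eqP -> ->|qs ->]; [left|right; apply: imset_f].
- by exists p => //; rewrite inE eqxx.
- by exists q => //; rewrite inE qs orbT.
Qed.

Lemma Inv_fold s : forall H Fm, valid_from r H s -> Inv H Fm ->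
  Inv (H :|: infected s) (foldl (@wstep n) Fm s).
Proof.
elim: s => [|[e K] s IH] H Fm /=.
  by rewrite infected_nil setU0.
move=> /and5P [/eqP cK /eqP ce eK eH /andP [/forall_inP hK v]] inv.
have := IH _ _ v (Inv_step inv cK ce eK eH (fun f fC fe => implyP (hK f fC) fe)).
by rewrite infected_cons /= setUA (setUC H).
Qed.
End Inv.

Unset Implicit Arguments.
Local Open Scope ring_scope.
Theorem lemma3p2 (r n : nat) (F : {set {set 'I_n}}) :
  (4 <= r)%N -> is_witness_set r F ->
  (#|F|%:R : rat) >= lambda r * ((vF F)%:R - 2) + 1.
Proof.
move=> r4 [G [s [e [gG vs _ eIn ->]]]].
have [_ _ part] := Inv_fold r4 vs (Inv_base r gG).
have [Pi [h1 _ h3]] := part [set e] ltac:(by rewrite sub1set).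
have [P PPi FP] := h3 e (set11 e).
have [g sub] := h1 P PPi.
have -> : witness_map s e = P.
  apply/eqP; rewrite eqEsubset; apply/andP; split; first exact: FP.
  by move: sub; rewrite big_set1.
exact: g.
Qed.
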